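(* Let $f\in C^1(\mathbb{R})$ and consider the primary matrix function $f:\mathrm{Sym}(n)\to\mathrm{Sym}(n)$. Consider the conditions: (H-mon) $\langle f(B)-f(A),B-A\rangle>0$ for all $A\neq B\in\mathrm{Sym}(n)$; (O-mon) for all $A,B\in\mathrm{Sym}(n)$: if $B-A$ is positive definite then $f(B)-f(A)$ is positive definite; (S-mon) for all $a,b\in\mathbb{R}$: $b>a$ implies $f(b)>f(a)$; (P-mon) $\langle f(A+H)-f(A),H\rangle>0$ for all $H\in\mathrm{PSym}(n)$ and $A\in\mathrm{Sym}(n)$. Then (O-mon) $\Rightarrow$ (S-mon) $\Leftrightarrow$ (H-mon) $\Leftrightarrow$ (P-mon), and these are the only implications that hold in general; in particular (S-mon) does not in general imply (O-mon).
   Context: $\mathrm{Sym}(n)$ is the space of real symmetric $n\times n$ matrices with inner product $\langle X,Y\rangle=\mathrm{tr}(X^TY)$, and $\mathrm{PSym}(n)$ is the set of symmetric positive definite matrices. The primary matrix function is $f(A)=Q^T\mathrm{diag}(f(\lambda_1),\dots,f(\lambda_n))Q$ whenever $A=Q^T\mathrm{diag}(\lambda_1,\dots,\lambda_n)Q$ with $Q\in\mathrm{O}(n)$. *)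

(* Defs.v *)
From HB Require Import structures.
From mathcomp Require Import all_boot all_order all_algebra.
From mathcomp Require Import all_classical all_reals all_analysis.
Set Implicit Arguments. Unset Strict Implicit. Unset Printing Implicit Defensive.
Import Order.TTheory GRing.Theory Num.Theory numFieldNormedType.Exports.
Local Open Scope classical_set_scope.
Local Open Scope ring_scope.

Section Defs.
Variable R : realType.

Definition C1 (f : R -> R) : Prop :=
  (forall x : R, derivable f x 1) /\ continuous (fun x : R => derive1 f x).

Definition symmx n (A : 'M[R]_n) : Prop := A^T = A.

Definition orthmx n (Q : 'M[R]_n) : Prop := Q^T *m Q = 1%:M.

Definition posdefmx n (A : 'M[R]_n) : Prop :=
  symmx A /\ forall x : 'cV[R]_n, x != 0 -> 0 < (x^T *m A *m x) 0 0.

Definition frob n (X Y : 'M[R]_n) : R := \tr (X^T *m Y).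

(* Primary matrix function: f(A) = Q^T diag(f(l_1),...,f(l_n)) Q whenever
   A = Q^T diag(l_1,...,l_n) Q with Q orthogonal (a matrix chosen among
   those arising from some such decomposition). *)
Definition primary_mx n (f : R -> R) (A : 'M[R]_n) : 'M[R]_n :=
  xget 0 [set M : 'M[R]_n | exists (Q : 'M[R]_n) (d : 'rV[R]_n),
     orthmx Q /\ A = Q^T *m diag_mx d *m Q /\
     M = Q^T *m diag_mx (map_mx f d) *m Q].

Definition Hmon n (f : R -> R) : Prop :=
  forall A B : 'M[R]_n, symmx A -> symmx B -> A != B ->
    0 < frob (primary_mx f B - primary_mx f A) (B - A).

Definition Omon n (f : R -> R) : Prop :=
  forall A B : 'M[R]_n, symmx A -> symmx B -> posdefmx (B - A) ->
    posdefmx (primary_mx f B - primary_mx f A).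

Definition Smon (f : R -> R) : Prop := forall a b : R, a < b -> f a < f b.

Definition Pmon n (f : R -> R) : Prop :=
  forall A H : 'M[R]_n, symmx A -> posdefmx H ->
    0 < frob (primary_mx f (A + H) - primary_mx f A) H.

End Defs.

(* Main.v *)
Require Import Defs.
From HB Require Import structures.
From mathcomp Require Import all_boot all_order all_algebra.
From mathcomp Require Import all_classical all_reals all_analysis.
From mathcomp Require Import complex sesquilinear spectral.
From mathcomp Require Import ring lra.
Import Order.TTheory GRing.Theory Num.Theory numFieldNormedType.Exports.
Local Open Scope ring_scope.
Set Implicit Arguments. Unset Strict Implicit. Unset Printing Implicit Defensive.

Section Spec.
Variable R : realType.
Lemma toC_real (x : R) : (real_complex R x) \is Num.real.
Proof.
rewrite realE !lecE /= eqxx /=; exact: num_real.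
Qed.

Lemma sym_eigen n (A : 'M[R]_n.+1) : A^T = A ->
  exists l : R, exists2 v : 'rV_n.+1, v != 0 & v *m A = l *: v.
Proof.
move=> As.
pose AC := map_mx (real_complex R) A.
have ACsym : AC \is symmetricmx.
  by apply/is_hermitianmxP; rewrite expr0 scale1r map_mx_id // /AC map_trmx As.
have ACreal : AC \is a realmx.
  by apply/mxOverP => i j; rewrite mxE toC_real.
have ACh : AC \is hermsymmx by exact: realsym_hermsym.
have /orthomx_spectralP ACe := hermitian_normalmx ACh.
have spreal := hermitian_spectral_diag_real ACh.
set P := spectralmx AC in ACe; set sp := spectral_diag AC in ACe spreal.
have Pu : P \in unitmx by exact: spectral_unit.
have PA : P *m AC = diag_mx sp *m P.
  by rewrite {1}ACe !mulmxA mulmxV // mul1mx.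
pose l : R := complex.Re (sp 0 0).
have spl : sp 0 0 = real_complex R l.
  by rewrite /l RRe_real //; move/mxOverP: spreal; apply.
have : \det (AC - (sp 0 0)%:M) == 0.
  apply/det0P; exists (row 0 P).
    apply: contraTneq Pu => r0; rewrite unitmxE unitfE negbK.
    by apply/det0P; exists (delta_mx 0 0); [apply/negP=> /eqP/matrixP/(_ 0 0); rewrite !mxE eqxx /= => /eqP; rewrite oner_eq0 | rewrite -rowE r0].
  rewrite mulmxBr -row_mul PA mul_diag_mx mul_mx_scalar.
  apply/eqP; rewrite subr_eq0; apply/eqP/rowP => j.
  by rewrite !mxE.
have -> : AC - (sp 0 0)%:M = map_mx (real_complex R) (A - l%:M).
  by rewrite map_mxB /= map_scalar_mx spl.
rewrite det_map_mx fmorph_eq0 => /det0P [v vn0 vA].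
exists l, v => //.
by apply/eqP; rewrite -subr_eq0 -mul_mx_scalar -mulmxBr vA.
Qed.
Lemma sqnorm_gt0 n (w : 'rV[R]_n) : w != 0 -> 0 < (w *m w^T) 0 0.
Proof.
move=> wn0; rewrite mxE lt_def; apply/andP; split; last first.
  by apply: sumr_ge0 => i _; rewrite mxE -expr2 sqr_ge0.
apply: contra wn0 => /eqP s0; apply/eqP/rowP => i; rewrite [RHS]mxE.
have h : forall j, predT j -> 0 <= w 0 j * w^T j 0.
  by move=> j _; rewrite mxE -expr2 sqr_ge0.
have /eqP := psumr_eq0P h s0 (i := i) isT.
by rewrite mxE mulf_eq0 orbb => /eqP.
Qed.

Lemma householder n (v : 'rV[R]_n.+1) : v *m v^T = 1%:M ->
  exists H : 'M[R]_n.+1, H^T = H /\ H *m H = 1%:M /\ row 0 H = v.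
Proof.
move=> vv.
have [ve0|vne0] := eqVneq v 'e_0.
  by exists 1%:M; rewrite trmx1 mulmx1 rowE mulmx1 ve0.
pose e : 'rV[R]_n.+1 := 'e_0.
pose w := v - e.
have wn0 : w != 0 by rewrite subr_eq0.
have ve : v *m e^T = (v 0 0)%:M.
  by rewrite /e trmx_delta -colE [LHS]mx11_scalar mxE.
have ee : e *m e^T = 1%:M.
  by rewrite /e trmx_delta -colE [LHS]mx11_scalar !mxE.
have ev : e *m v^T = (v 0 0)%:M.
  by rewrite -[e *m _]trmxK trmx_mul trmxK ve tr_scalar_mx.
pose s := 2 - 2 * v 0 0.
have ww : w *m w^T = s%:M.
  rewrite /w linearB /= mulmxBl !mulmxBr vv ve ev ee.
  by apply/matrixP => i j; rewrite !mxE /s; ring.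
have s0 : s != 0.
  by have := sqnorm_gt0 wn0; rewrite ww mxE eqxx mulr1n lt0r => /andP[].
pose c := 2 / s.
have wE : w = v - e by [].
have cs : c * (v 0 0 - 1) = -1 by rewrite /c /s; field; move: s0; rewrite /s.
have cc : c * c * s = c + c by rewrite /c; field.
clearbody w c s.
have KK : (w^T *m w) *m (w^T *m w) = s *: (w^T *m w).
  by rewrite mulmxA -[w^T *m w *m w^T]mulmxA ww mul_mx_scalar -scalemxAl.
exists (1%:M - c *: (w^T *m w)).
split; first by rewrite linearB /= linearZ /= trmx_mul trmxK trmx1.
split.
  rewrite mulmxBl !mulmxBr mul1mx mulmx1 -!scalemxAl -!scalemxAr mul1mx KK.
  rewrite !scalerA cc scalerDl.
  move: (c *: _) => x.
  by apply/matrixP => i j; rewrite !mxE; ring.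
rewrite rowE mulmxBr mulmx1 -scalemxAr mulmxA {1}wE linearB /= mulmxBr ev ee.
rewrite -(raddfB (@scalar_mx R _)) mul_scalar_mx scalerA cs.
by rewrite scaleN1r opprK wE addrC subrK.
Qed.
Lemma spectral_real n (A : 'M[R]_n) : A^T = A ->
  exists Q : 'M[R]_n, exists d : 'rV[R]_n, Q^T *m Q = 1%:M /\ A = Q^T *m diag_mx d *m Q.
Proof.
elim: n A => [|n IH] A As.
  by exists 1%:M, 0; split; [rewrite trmx1 mulmx1 | apply/matrixP => [] []].
move: A As; rewrite -[n.+1]/(1 + n)%N => A As.
have [l [v0 v0n0 v0A]] := sym_eigen As.
pose s := (v0 *m v0^T) 0 0.
have s0 : 0 < s := sqnorm_gt0 v0n0.
pose v := (Num.sqrt s)^-1 *: v0.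
have vv : v *m v^T = 1%:M.
  rewrite /v linearZ /= -scalemxAl -scalemxAr scalerA [v0 *m _]mx11_scalar -/s.
  rewrite -mul_scalar_mx -scalar_mxM; congr (_%:M).
  rewrite -invfM -expr2 sqr_sqrtr ?mulVf //; [exact: lt0r_neq0 | exact: ltW].
have vA : v *m A = l *: v by rewrite /v -scalemxAl v0A !scalerA mulrC.
have [H [Hs [HH H0]]] : exists H : 'M[R]_(1 + n),
  H^T = H /\ H *m H = 1%:M /\ row 0 H = v := householder vv.
pose A1 : 'M[R]_(1 + n) := H *m A *m H.
have A1s : A1^T = A1 by rewrite /A1 !trmx_mul Hs As mulmxA.
have rA1 : row 0 A1 = l *: row 0 (1%:M : 'M[R]_n.+1).
  by rewrite /A1 !row_mul H0 vA -scalemxAl -H0 -row_mul HH.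
have A1r : forall j : 'I_n.+1, A1 0 j = l * (0 == j)%:R.
  by move=> j; have /rowP/(_ j) := rA1; rewrite !mxE.
have A1E : A1 = H *m A *m H by [].
clearbody A1.
pose A' := drsubmx A1.
have A's : A'^T = A' by rewrite /A' trmx_drsub A1s.
have [Q' [d' [Q'o A'e]]] := IH A' A's.
have A1b : A1 = block_mx (l%:M : 'M[R]_1) 0 0 A'.
  rewrite -[A1 in LHS]submxK; congr block_mx.
  - apply/matrixP => i j; rewrite !ord1 !mxE.
    have -> : lshift n (0 : 'I_1) = 0 :> 'I_n.+1 by apply/val_inj.
    by rewrite A1r eqxx /= mulr1.
  - apply/matrixP => i j; rewrite !ord1 !mxE.
    have -> : lshift n (0 : 'I_1) = 0 :> 'I_n.+1 by apply/val_inj.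
    by rewrite A1r mulr0.
  - apply/matrixP => i j; rewrite !ord1 !mxE -[A1]A1s mxE.
    have -> : lshift n (0 : 'I_1) = 0 :> 'I_n.+1 by apply/val_inj.
    by rewrite A1r mulr0.
pose Q : 'M[R]_(1 + n) := block_mx 1%:M 0 0 Q' *m H.
pose d : 'rV[R]_(1 + n) := row_mx (l%:M : 'M[R]_1) d'.
exists Q, d; split.
  rewrite /Q trmx_mul tr_block_mx !trmx0 trmx1 mulmxA -[_ *m block_mx _ _ _ _ *m _]mulmxA.
  rewrite !mulmxA -(mulmxA H^T) mulmx_block !mulmx0 !mul0mx !mulmx1 !addr0 !add0r Q'o.
  by rewrite -scalar_mx_block mulmx1 Hs HH.
have -> : A = H *m A1 *m H.
  by rewrite A1E !mulmxA HH mul1mx -mulmxA HH mulmx1.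
rewrite A1b /Q /d diag_mx_row trmx_mul tr_block_mx !trmx0 trmx1 Hs !mulmxA.
congr (_ *m _); rewrite -!mulmxA; congr (_ *m _); rewrite !mulmxA.
rewrite !mulmx_block !mulmx0 !mul0mx !mulmx1 !mul1mx !addr0 !add0r.
congr block_mx; last by rewrite A'e.
- by apply/matrixP => i j; rewrite !ord1 !mxE.
- by rewrite mul0mx.
Qed.
Lemma primary_spec n f (A : 'M[R]_n) : A^T = A -> exists Q, exists d : 'rV[R]_n,
  Q^T *m Q = 1%:M /\ A = Q^T *m diag_mx d *m Q /\
  primary_mx f A = Q^T *m diag_mx (map_mx f d) *m Q.
Proof.
move=> As; have [Q [d [Qo Ae]]] := spectral_real As.
rewrite /primary_mx; set S := (X in xget _ X).
have : S (xget 0 S).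
  by apply: xgetPex; exists (Q^T *m diag_mx (map_mx f d) *m Q), Q, d.
by move=> [Q' [d' [Q'o [A'e M'e]]]]; exists Q', d'.
Qed.

Lemma primary_scalar n f (a : R) : primary_mx f (a%:M : 'M[R]_n) = (f a)%:M.
Proof.
have [Q [d [Qo [Ae ->]]]] := primary_spec f (@tr_scalar_mx _ n a).
have Qo' := mulmx1C Qo.
have Dd : diag_mx d = a%:M.
  have : Q *m a%:M *m Q^T = Q *m (Q^T *m diag_mx d *m Q) *m Q^T by rewrite -Ae.
  rewrite mul_mx_scalar -scalemxAl Qo' scalemx1 => ->.
  by rewrite !mulmxA Qo' mul1mx -mulmxA Qo' mulmx1.
have dE : forall i, d 0 i = a.
  by move=> i; have /matrixP/(_ i i) := Dd; rewrite !mxE eqxx !mulr1n.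
have -> : diag_mx (map_mx f d) = (f a)%:M.
  by apply/matrixP => i j; rewrite !mxE dE.
by rewrite mul_mx_scalar -scalemxAl Qo scalemx1.
Qed.

Lemma primary_cube n (A : 'M[R]_n) : A^T = A ->
  primary_mx (fun x => x ^+ 3) A = A *m A *m A.
Proof.
move=> As; have [Q [d [Qo [Ae ->]]]] := primary_spec (fun x => x ^+ 3) As.
have Qo' := mulmx1C Qo.
have -> : diag_mx (map_mx (fun x => x ^+ 3) d) = diag_mx d *m diag_mx d *m diag_mx d.
  by rewrite !mulmx_diag; congr diag_mx; apply/rowP => j; rewrite !mxE exprSr expr2.
rewrite Ae; rewrite !mulmxA; congr (_ *m _).
by rewrite -!(mulmxA _ Q) Qo' !mulmx1.
Qed.

Lemma tr_conj n (P Q : 'M[R]_n) (u v : 'rV[R]_n) :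
  \tr ((Q^T *m diag_mx u *m Q) *m (P^T *m diag_mx v *m P)) =
  \sum_i \sum_j u 0 i * v 0 j * (Q *m P^T) i j ^+ 2.
Proof.
rewrite -!mulmxA mxtrace_mulC !mulmxA.
have -> : diag_mx u *m Q *m P^T *m diag_mx v *m P *m Q^T =
    diag_mx u *m (Q *m P^T) *m diag_mx v *m (Q *m P^T)^T.
  by rewrite trmx_mul trmxK !mulmxA.
rewrite /mxtrace; apply: eq_bigr => i _.
rewrite mxE; apply: eq_bigr => j _.
by rewrite mul_mx_diag mul_diag_mx !mxE; ring.
Qed.

Lemma tr_same n (Q : 'M[R]_n) (u v : 'rV[R]_n) : Q^T *m Q = 1%:M ->
  \tr ((Q^T *m diag_mx u *m Q) *m (Q^T *m diag_mx v *m Q)) = \sum_i u 0 i * v 0 i.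
Proof.
move=> Qo; have Qo' := mulmx1C Qo.
rewrite -!mulmxA mxtrace_mulC !mulmxA -(mulmxA _ Q) Qo' mulmx1 -(mulmxA _ Q) Qo' mulmx1.
by rewrite mulmx_diag mxtrace_diag; apply: eq_bigr => i _; rewrite mxE.
Qed.

Lemma rowsum1 n (W : 'M[R]_n) i : W *m W^T = 1%:M -> \sum_j W i j ^+ 2 = 1.
Proof.
move=> WW; have /matrixP/(_ i i) := WW; rewrite !mxE eqxx mulr1n => <-.
by apply: eq_bigr => j _; rewrite mxE expr2.
Qed.

Lemma colsum1 n (W : 'M[R]_n) j : W^T *m W = 1%:M -> \sum_i W i j ^+ 2 = 1.
Proof.
move=> WW; have /matrixP/(_ j j) := WW; rewrite !mxE eqxx mulr1n => <-.
by apply: eq_bigr => i _; rewrite mxE expr2.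
Qed.
Lemma smon_hmon n (f : R -> R) : Smon f -> Hmon n f.
Proof.
move=> Sf A B As Bs AB.
have [P [a [Po [Ae FAe]]]] := primary_spec f As.
have [Q [b [Qo [Be FBe]]]] := primary_spec f Bs.
have Po' := mulmx1C Po; have Qo' := mulmx1C Qo.
pose W := Q *m P^T.
have WW : W *m W^T = 1%:M.
  by rewrite /W trmx_mul trmxK !mulmxA -(mulmxA Q) Po mulmx1 Qo'.
have WW' : W^T *m W = 1%:M by exact: mulmx1C.
have PQ : P *m Q^T = W^T by rewrite /W trmx_mul trmxK.
have WE : W = Q *m P^T by [].
clearbody W.
pose F i j := W i j ^+ 2 * ((f (b 0 i) - f (a 0 j)) * (b 0 i - a 0 j)).
have key : frob (primary_mx f B - primary_mx f A) (B - A) = \sum_i \sum_j F i j.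
  rewrite /frob.
  have -> : B - A = Q^T *m diag_mx b *m Q - P^T *m diag_mx a *m P by rewrite -Ae -Be.
  rewrite FAe FBe.
  have -> : (Q^T *m diag_mx (map_mx f b) *m Q - P^T *m diag_mx (map_mx f a) *m P)^T =
      Q^T *m diag_mx (map_mx f b) *m Q - P^T *m diag_mx (map_mx f a) *m P.
    by rewrite linearB /= !trmx_mul !trmxK !tr_diag_mx !mulmxA.
  rewrite mulmxBl !mulmxBr !linearB /= (tr_same _ _ Qo) (tr_same _ _ Po) !tr_conj PQ.
  have t1 : \sum_i (map_mx f b) 0 i * b 0 i =
      \sum_i \sum_j f (b 0 i) * b 0 i * W i j ^+ 2.
    by apply: eq_bigr => i _; rewrite -mulr_sumr rowsum1 // mulr1 mxE.
  have t4 : \sum_i (map_mx f a) 0 i * a 0 i =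
      \sum_i \sum_j f (a 0 j) * a 0 j * W i j ^+ 2.
    by rewrite exchange_big; apply: eq_bigr => j _; rewrite -mulr_sumr colsum1 // mulr1 mxE.
  have t3 : \sum_i \sum_j (map_mx f a) 0 i * b 0 j * (W^T) i j ^+ 2 =
      \sum_i \sum_j b 0 i * f (a 0 j) * W i j ^+ 2.
    by rewrite exchange_big; apply: eq_bigr => i _; apply: eq_bigr => j _; rewrite !mxE; ring.
  have t2 : \sum_i \sum_j (map_mx f b) 0 i * a 0 j * W i j ^+ 2 =
      \sum_i \sum_j f (b 0 i) * a 0 j * W i j ^+ 2.
    by apply: eq_bigr => i _; apply: eq_bigr => j _; rewrite !mxE.
  rewrite -WE t1 t2 t3 t4.
  rewrite -!sumrN -!big_split; apply: eq_bigr => i _.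
  rewrite -!sumrN -!big_split; apply: eq_bigr => j _; rewrite /F /=; ring.
have F0 : forall i j, 0 <= F i j.
  move=> i j; rewrite /F mulr_ge0 ?sqr_ge0 //.
  case: (ltgtP (b 0 i) (a 0 j)) => [lt|gt|->]; last by rewrite subrr mul0r.
  - have := Sf _ _ lt => flt.
    by rewrite -mulrNN !opprB mulr_ge0 // subr_ge0 ltW.
  - have := Sf _ _ gt => fgt.
    by rewrite mulr_ge0 // subr_ge0 ltW.
rewrite key lt_def; apply/andP; split; last first.
  by apply: sumr_ge0 => i _; apply: sumr_ge0 => j _.
apply/negP => /eqP S0.
have Fz : forall i j, F i j = 0.
  move=> i j.
  have Si : \sum_j F i j = 0.
    by apply: (psumr_eq0P (P := predT) _ S0) => // k _; apply: sumr_ge0 => l _.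
  by apply: (psumr_eq0P (P := predT) _ Si).
have WD : W *m diag_mx a = diag_mx b *m W.
  apply/matrixP => i j; rewrite mul_mx_diag mul_diag_mx !mxE.
  case: (eqVneq (W i j) 0) => [->|Wn0]; first by rewrite mulr0 mul0r.
  have : (f (b 0 i) - f (a 0 j)) * (b 0 i - a 0 j) = 0.
    by have /eqP := Fz i j; rewrite /F mulf_eq0 expf_eq0 /= (negbTE Wn0) /= => /eqP.
  case: (ltgtP (b 0 i) (a 0 j)) => [lt|gt|->]; last by move=> _; rewrite mulrC.
  - have := Sf _ _ lt => flt.
    by rewrite -mulrNN !opprB => /eqP; rewrite mulf_eq0 !subr_eq0 (gt_eqF flt) (gt_eqF lt).
  - have := Sf _ _ gt => fgt.
    by move/eqP; rewrite mulf_eq0 !subr_eq0 (gt_eqF fgt) (gt_eqF gt).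
have : Q^T *m (W *m diag_mx a) *m P = Q^T *m (diag_mx b *m W) *m P by rewrite WD.
rewrite WE !mulmxA Qo mul1mx -Ae -(mulmxA _ P^T P) Po mulmx1 -Be => eAB.
by move: AB; rewrite eAB eqxx.
Qed.
End Spec.

Section Main.
Variable R : realType.

Lemma delta_neq0 n (i : 'I_n) : (delta_mx i 0 : 'cV[R]_n) != 0.
Proof.
apply/negP => /eqP/matrixP/(_ i 0); rewrite !mxE !eqxx /= => /eqP.
by rewrite oner_eq0.
Qed.

Lemma quad_delta n (M : 'M[R]_n) (i j : 'I_n) :
  ((delta_mx i 0 : 'cV[R]_n)^T *m M *m (delta_mx j 0 : 'cV[R]_n)) 0 0 = M i j.
Proof.
by rewrite trmx_delta -rowE -colE !mxE.
Qed.

Lemma quad_delta_mx n (M : 'M[R]_n) (i j : 'I_n) :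
  (delta_mx i 0 : 'cV[R]_n)^T *m M *m (delta_mx j 0 : 'cV[R]_n) = (M i j)%:M.
Proof. by rewrite [LHS]mx11_scalar quad_delta. Qed.

Lemma posdef_scalar n (c : R) : (0 < n)%N -> posdefmx (c%:M : 'M[R]_n) -> 0 < c.
Proof.
move=> n0 [_ /(_ _ (delta_neq0 (Ordinal n0)))].
by rewrite quad_delta mxE eqxx mulr1n.
Qed.

Lemma scalar_posdef n (c : R) : 0 < c -> posdefmx (c%:M : 'M[R]_n).
Proof.
move=> c0; split; first exact: tr_scalar_mx.
move=> x xn0; rewrite mul_mx_scalar -scalemxAl mxE mulr_gt0 //.
have : x^T != 0 by rewrite trmx_eq0.
by move/sqnorm_gt0; rewrite trmxK.
Qed.
Lemma scalar_symm n (a : R) : symmx (a%:M : 'M[R]_n).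
Proof. exact: tr_scalar_mx. Qed.

Lemma frob_scalar n (a b : R) : frob (a%:M : 'M[R]_n) b%:M = (a * b) *+ n.
Proof. by rewrite /frob tr_scalar_mx -scalar_mxM mxtrace_scalar. Qed.

Lemma scalarB n (a b : R) : (a%:M : 'M[R]_n) - b%:M = (a - b)%:M.
Proof. by rewrite -(raddfB (@scalar_mx R n)). Qed.

Lemma omon_smon n (f : R -> R) : (0 < n)%N -> Omon n f -> Smon f.
Proof.
move=> n0 Of a b ab.
have hp : posdefmx ((b - a)%:M : 'M[R]_n) by apply: scalar_posdef; rewrite subr_gt0.
have := Of (a%:M) (b%:M) (scalar_symm n a) (scalar_symm n b).
rewrite !primary_scalar !scalarB -subr_gt0 => /(_ hp).
exact: posdef_scalar.
Qed.

Lemma hmon_smon n (f : R -> R) : (0 < n)%N -> Hmon n f -> Smon f.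
Proof.
move=> n0 Hf a b ab.
have ne : (a%:M : 'M[R]_n) != b%:M.
  apply/negP => /eqP/matrixP/(_ (Ordinal n0) (Ordinal n0)).
  by rewrite !mxE eqxx !mulr1n => e; move: ab; rewrite e ltxx.
have := Hf (a%:M) (b%:M) (scalar_symm n a) (scalar_symm n b) ne.
rewrite !primary_scalar !scalarB frob_scalar pmulrn_lgt0 // pmulr_lgt0 ?subr_gt0 //.
Qed.

Lemma pmon_smon n (f : R -> R) : (0 < n)%N -> Pmon n f -> Smon f.
Proof.
move=> n0 Pf a b ab.
have hp : posdefmx ((b - a)%:M : 'M[R]_n) by apply: scalar_posdef; rewrite subr_gt0.
have := Pf (a%:M) ((b - a)%:M) (scalar_symm n a) hp.
rewrite -(raddfD (@scalar_mx R n)) subrKC !primary_scalar scalarB frob_scalar.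
by rewrite pmulrn_lgt0 // pmulr_lgt0 ?subr_gt0.
Qed.

Lemma hmon_pmon n (f : R -> R) : (0 < n)%N -> Hmon n f -> Pmon n f.
Proof.
move=> n0 Hf A H As [Hs Hp].
have ne : A != A + H.
  apply/negP => /eqP e.
  have H0 : H = 0 by apply: (@addrI _ A); rewrite addr0 -e.
  have := Hp _ (delta_neq0 (Ordinal n0)).
  by rewrite H0 mulmx0 mul0mx mxE ltxx.
have ApH : symmx (A + H) by rewrite /symmx linearD /= As Hs.
have := Hf A (A + H) As ApH ne.
by rewrite (addrC A H) addrK.
Qed.
Lemma sqnorm_ge0 p (w : 'rV[R]_p) : 0 <= (w *m w^T) 0 0.
Proof. by rewrite mxE; apply: sumr_ge0 => k _; rewrite mxE -expr2 sqr_ge0. Qed.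

Lemma not_omon_cube n : (1 < n)%N -> ~ Omon n (fun x : R => x ^+ 3).
Proof.
case: n => [|[|m]] // _ Of.
pose i0 : 'I_m.+2 := 0.
pose i1 : 'I_m.+2 := lift 0 0.
have n10 : (i1 == i0) = false by [].
have n01 : (i0 == i1) = false by rewrite eq_sym.
clearbody i0 i1.
pose E (i j : 'I_m.+2) : 'M[R]_m.+2 := delta_mx i j.
pose e (i : 'I_m.+2) : 'cV[R]_m.+2 := delta_mx i 0.
pose A := E i0 i0 + 2%:R *: E i0 i1 + 2%:R *: E i1 i0 + E i1 i1.
pose Hm := 1%:M + 2%:R *: E i1 i1.
pose B := A + Hm.
pose x := 2%:R *: e i0 - e i1.
have As : A^T = A.
  rewrite /A !linearD /= !linearZ /= /E !trmx_delta.
  by congr (_ + _); rewrite addrAC.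
have Hs : Hm^T = Hm by rewrite /Hm linearD /= linearZ /= /E trmx_delta trmx1.
have Bs : B^T = B by rewrite /B linearD /= As Hs.
have BA : B - A = Hm by rewrite /B (addrC A) addrK.
have Hp : posdefmx Hm.
  split => // y yn0.
  rewrite /Hm mulmxDr mulmx1 mulmxDl mxE -scalemxAr -scalemxAl [X in _ + X]mxE.
  have h1 : 0 < (y^T *m y) 0 0.
    by have := sqnorm_gt0 (w := y^T); rewrite trmxK trmx_eq0 => /(_ yn0).
  have h2 : 0 <= (y^T *m E i1 i1 *m y) 0 0.
    have -> : E i1 i1 = e i1 *m (e i1)^T by rewrite /e /E trmx_delta mul_delta_mx.
    by rewrite mulmxA -mulmxA -{2}[y]trmxK -trmx_mul; apply: sqnorm_ge0.
  by move: h1 h2; set u := (y^T *m y) 0 0; set v := (y^T *m _ *m y) 0 0; lra.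
have := Of A B As Bs; rewrite BA => /(_ Hp).
rewrite !primary_cube // => -[_ /(_ x)].
have Ax : A *m x = 3%:R *: e i1.
  rewrite /A /x /E /e !mulmxDl !mulmxBr -!scalemxAl -!scalemxAr !mul_delta_mx_cond.
  rewrite n01 n10 !eqxx !mulr0n !mulr1n.
  by apply/matrixP => i j; rewrite !mxE; ring.
have Bx : B *m x = 2%:R *: e i0.
  rewrite /B mulmxDl Ax /Hm mulmxDl mul1mx /x /E /e mulmxBr -!scalemxAl -!scalemxAr.
  rewrite !mul_delta_mx_cond n10 eqxx mulr0n mulr1n.
  by apply/matrixP => i j; rewrite !mxE; ring.
have xn0 : x != 0.
  apply/negP => /eqP/matrixP/(_ i0 0); rewrite /x /e !mxE eqxx n01 /= => /eqP.
  by rewrite mulr1 subr0 pnatr_eq0.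
have cub : forall M : 'M[R]_m.+2, M^T = M ->
    x^T *m (M *m M *m M) *m x = (M *m x)^T *m M *m (M *m x).
  by move=> M Ms; rewrite trmx_mul Ms !mulmxA.
clearbody x; move=> /(_ xn0).
rewrite mulmxBr mulmxBl cub // cub // Bx Ax !linearZ /= /e /= -!scalemxAl !quad_delta_mx.
rewrite !mxE !eqxx n01 n10 /=.
apply/negP; rewrite -leNgt; lra.
Qed.

Lemma cube_mono (a b : R) : a < b -> a ^+ 3 < b ^+ 3.
Proof.
move=> h.
have h1 : 0 < (a + b) ^+ 2 + a ^+ 2 + b ^+ 2.
  have : 0 < (b - a) ^+ 2 by rewrite exprn_gt0 // subr_gt0.
  nra.
have h2 : 0 < (b - a) * ((a + b) ^+ 2 + a ^+ 2 + b ^+ 2) by rewrite mulr_gt0 // subr_gt0.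
have -> : b ^+ 3 = a ^+ 3 + (b - a) * ((a + b) ^+ 2 + a ^+ 2 + b ^+ 2) / 2 by field.
by rewrite ltrDl divr_gt0.
Qed.

Lemma C1_cube : C1 (fun x : R => x ^+ 3).
Proof.
split => [x|]; first exact: exprn_derivable.
have -> : (fun x => derive1 (fun y : R => y ^+ 3) x) = (fun x => 3%:R *: x ^+ 2).
  by apply/funext => x; rewrite exp_derive1.
move=> x; apply: (@continuousZ _ _ _ (fun=> 3%:R) (fun x : R => x ^+ 2)); [exact: cst_continuous | exact: exprn_continuous].
Qed.
End Main.

Unset Implicit Arguments.

Theorem proposition4p1 (R : realType) :
  (forall (n : nat) (f : R -> R), (0 < n)%N -> C1 f ->
     (Omon n f -> Smon f) /\ (Smon f <-> Hmon n f) /\ (Smon f <-> Pmon n f)) /\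
  (forall n : nat, (1 < n)%N ->
     exists f : R -> R, C1 f /\ Smon f /\ ~ Omon n f).
Proof.
split.
  move=> n f n0 _; split; first exact: omon_smon n0.
  split; split.
  - exact: smon_hmon.
  - exact: hmon_smon n0.
  - by move=> Sf; apply: hmon_pmon n0 _; apply: smon_hmon.
  - exact: pmon_smon n0.
move=> n n1; exists (fun x : R => x ^+ 3); split; first exact: C1_cube.
split; last exact: not_omon_cube.
by move=> a b; apply: cube_mono.
Qed.
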